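(* Let $a>0$, $b>0$, $c\ge 0$ be constants and consider, for a function $u(t,x)$ on $t>0$, $x>0$, the non-linear Black--Scholes equation $$u_t+ax^2u_{xx}+bx^3u_{xx}^2+cxu_x-cu=0.$$ Define new variables $(\bar t,\bar x,\bar u)$ by if $c=0$: $\bar t=t$, $\bar x=\log\frac{x}{b}$, $\bar u=\frac{bu}{x}+\frac a2\log\frac xb-\frac{a^2}{4}t$; if $c>0$: $\bar t=ct$, $\bar x=\log\frac{cx}{b}-ct$, $\bar u=\frac{bu}{cx}+\frac{a}{2c}\log\frac{cx}{b}-\frac a2\left(1+\frac{a}{2c}\right)t$. Then $u(t,x)$ is a (sufficiently smooth) solution of the Black--Scholes equation above if and only if $\bar u$, regarded as a function of $(\bar t,\bar x)$, satisfies $$\bar u_{\bar t}+\left(\bar u_{\bar x}+\bar u_{\bar x\bar x}\right)^2=0.$$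
   Context: Here $\log$ is the natural logarithm. In the formula for $\bar u$ the variable $t$ is the original time variable. *)

(* Defs.v *)
From Stdlib Require Import Reals.
From Coquelicot Require Import Coquelicot.
Open Scope R_scope.

Definition d1 (u : R -> R -> R) (t x : R) : R := Derive (fun s => u s x) t.
Definition d2 (u : R -> R -> R) (t x : R) : R := Derive (fun y => u t y) x.

Definition smooth_BS (u : R -> R -> R) : Prop :=
  forall t x, 0 < t -> 0 < x ->
    ex_derive (fun s => u s x) t /\
    ex_derive (fun y => u t y) x /\
    ex_derive (fun y => d2 u t y) x /\
    continuous (fun p : R * R => d1 u (fst p) (snd p)) (t, x) /\
    continuous (fun p : R * R => d2 u (fst p) (snd p)) (t, x).

Definition solves_BS (a b c : R) (u : R -> R -> R) : Prop :=
  forall t x, 0 < t -> 0 < x ->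
    d1 u t x + a * x ^ 2 * d2 (d2 u) t x + b * x ^ 3 * (d2 (d2 u) t x) ^ 2
      + c * x * d2 u t x - c * u t x = 0.

Definition solves_target (U : R -> R -> R) : Prop :=
  forall tb xb, 0 < tb ->
    d1 U tb xb + (d2 U tb xb + d2 (d2 U) tb xb) ^ 2 = 0.

(* Case c = 0: tb = t, xb = ln (x/b); inverse t = tb, x = b * exp xb.
   ubar = b u / x + a/2 ln(x/b) - a^2/4 t. *)
Definition ubar0 (a b : R) (u : R -> R -> R) (tb xb : R) : R :=
  let t := tb in
  let x := b * exp xb in
  b * u t x / x + a / 2 * ln (x / b) - a ^ 2 / 4 * t.

(* Case c > 0: tb = c t, xb = ln (c x / b) - c t;
   inverse t = tb / c, x = (b / c) * exp (xb + tb).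
   ubar = b u / (c x) + a/(2c) ln(c x / b) - a/2 (1 + a/(2c)) t. *)
Definition ubarc (a b c : R) (u : R -> R -> R) (tb xb : R) : R :=
  let t := tb / c in
  let x := b / c * exp (xb + tb) in
  b * u t x / (c * x) + a / (2 * c) * ln (c * x / b)
    - a / 2 * (1 + a / (2 * c)) * t.

(* Main.v *)
Require Import Defs.
From Stdlib Require Import Reals Lra.
From Coquelicot Require Import Coquelicot.
Open Scope R_scope.
Open Scope R_scope.
Lemma diff_of_partials (f : R -> R -> R) x y :
  (exists d : posreal, forall u v, Rabs (u - x) < d -> Rabs (v - y) < d ->
      ex_derive (fun s => f s v) u) ->
  ex_derive (fun s => f x s) y ->
  continuity_2d_pt (fun u v => Derive (fun s => f s v) u) x y ->
  differentiable_pt_lim f x y (Derive (fun s => f s y) x) (Derive (fun s => f x s) y).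
Proof.
intros [d Hd] Hy Hc eps.
assert (He2 : 0 < eps / 2) by (destruct eps; simpl; lra).
set (e2 := mkposreal _ He2).
destruct (Hc e2) as [d1 Hd1].
assert (Hy' := Derive_correct _ _ Hy).
apply is_derive_Reals in Hy'.
destruct (Hy' (eps/2) He2) as [d2 Hd2].
assert (Hdm : 0 < Rmin d (Rmin d1 d2)).
{ destruct d, d1, d2; simpl. repeat apply Rmin_pos; lra. }
exists (mkposreal _ Hdm). simpl. intros u v Hu Hv.
assert (Hu1 : Rabs (u - x) < d) by (eapply Rlt_le_trans; [exact Hu| apply Rmin_l]).
assert (Hu2 : Rabs (u - x) < d1) by (eapply Rlt_le_trans; [exact Hu| eapply Rle_trans; [apply Rmin_r|apply Rmin_l]]).
assert (Hv1 : Rabs (v - y) < d) by (eapply Rlt_le_trans; [exact Hv| apply Rmin_l]).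
assert (Hv2 : Rabs (v - y) < d1) by (eapply Rlt_le_trans; [exact Hv| eapply Rle_trans; [apply Rmin_r|apply Rmin_l]]).
assert (Hv3 : Rabs (v - y) < d2) by (eapply Rlt_le_trans; [exact Hv| eapply Rle_trans; apply Rmin_r]).
destruct (MVT_cor4 (fun s => f s v) (fun c => Derive (fun s => f s v) c) x (Rabs (u - x)))
  with (b := u) as [cc [Hmvt Hcc]].
{ intros c0 Hc0. apply Derive_correct. apply Hd; lra. }
{ lra. }
assert (Hcont : Rabs (Derive (fun s => f s v) cc - Derive (fun s => f s y) x) < eps / 2).
{ apply (Hd1 cc v); lra. }
assert (H2 : Rabs (f x v - f x y - Derive (fun s => f x s) y * (v - y)) <= eps / 2 * Rabs (v - y)).
{ destruct (Req_dec (v - y) 0) as [H0|H0].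
  - replace v with y by lra.
    replace (f x y - f x y - Derive (fun s => f x s) y * (y - y)) with 0 by ring.
    replace (y - y) with 0 by ring. rewrite Rabs_R0. lra.
  - assert (Hq := Hd2 (v - y) H0 Hv3).
    replace (y + (v - y)) with v in Hq by ring.
    replace (f x v - f x y - Derive (fun s => f x s) y * (v - y)) with
      (((f x v - f x y) / (v - y) - Derive (fun s => f x s) y) * (v - y)) by (field; auto).
    rewrite Rabs_mult. apply Rmult_le_compat_r; [apply Rabs_pos|apply Rlt_le; exact Hq]. }
assert (H1 : Rabs (f u v - f x v - Derive (fun s => f s y) x * (u - x)) <= eps / 2 * Rabs (u - x)).
{ rewrite Hmvt. replace (Derive (fun s => f s v) cc * (u - x) - Derive (fun s => f s y) x * (u - x))
    with ((Derive (fun s => f s v) cc - Derive (fun s => f s y) x) * (u - x)) by ring.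
  rewrite Rabs_mult. apply Rmult_le_compat_r; [apply Rabs_pos|lra]. }
eapply Rle_trans.
{ replace (f u v - f x y - (Derive (fun s => f s y) x * (u - x) + Derive (fun s => f x s) y * (v - y)))
    with ((f u v - f x v - Derive (fun s => f s y) x * (u - x)) + (f x v - f x y - Derive (fun s => f x s) y * (v - y))) by ring.
  apply Rabs_triang. }
assert (Rabs (u - x) <= Rmax (Rabs (u - x)) (Rabs (v - y))) by apply Rmax_l.
assert (Rabs (v - y) <= Rmax (Rabs (u - x)) (Rabs (v - y))) by apply Rmax_r.
assert (0 <= eps) by (destruct eps; simpl; lra).
nra.
Qed.

Lemma smooth_diff (u : R -> R -> R) t x : smooth_BS u -> 0 < t -> 0 < x ->
  differentiable_pt_lim u t x (Defs.d1 u t x) (Defs.d2 u t x).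
Proof.
intros Hs Ht Hx.
apply diff_of_partials.
- assert (Hm : 0 < Rmin t x) by (apply Rmin_pos; lra).
  exists (mkposreal _ Hm). simpl. intros u' v' H1 H2.
  assert (Rmin t x <= t) by apply Rmin_l. assert (Rmin t x <= x) by apply Rmin_r.
  apply Rabs_def2 in H1. apply Rabs_def2 in H2.
  apply (Hs u' v'); lra.
- apply (Hs t x Ht Hx).
- destruct (Hs t x Ht Hx) as (_ & _ & _ & Hc & _).
  apply continuity_2d_pt_filterlim. exact Hc.
Qed.

Lemma ubarc_eq a b c u s y : 0 < b -> 0 < c ->
  ubarc a b c u s y = / exp (y + s) * u (s / c) (b / c * exp (y + s))
    + a / (2 * c) * (y + s) - a / 2 * (1 + a / (2 * c)) * (s / c).
Proof.
intros Hb Hc. unfold ubarc.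
replace (c * (b / c * exp (y + s)) / b) with (exp (y + s)) by (field; lra).
rewrite ln_exp. assert (exp (y + s) > 0) by apply exp_pos.
field. repeat split; lra.
Qed.

Lemma d2_ubarc a b c u tb y : 0 < b -> 0 < c -> 0 < tb -> smooth_BS u ->
  Defs.d2 (ubarc a b c u) tb y =
  - / exp (y + tb) * u (tb / c) (b / c * exp (y + tb))
  + b / c * Defs.d2 u (tb / c) (b / c * exp (y + tb)) + a / (2 * c).
Proof.
intros Hb Hc Ht Hs. unfold Defs.d2 at 1.
rewrite (Derive_ext _ (fun y => / exp (y + tb) * u (tb / c) (b / c * exp (y + tb))
    + a / (2 * c) * (y + tb) - a / 2 * (1 + a / (2 * c)) * (tb / c)))
  by (intros; apply ubarc_eq; lra).
assert (HX : 0 < b / c * exp (y + tb)) by (apply Rmult_lt_0_compat; [apply Rdiv_lt_0_compat|apply exp_pos]; lra).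
assert (Htc : 0 < tb / c) by (apply Rdiv_lt_0_compat; lra).
apply is_derive_unique. auto_derive.
- repeat split. apply Rgt_not_eq, exp_pos. apply (Hs _ _ Htc HX).
- unfold Defs.d2. assert (exp (y + tb) > 0) by apply exp_pos. field. repeat split; lra.
Qed.

Lemma d22_ubarc a b c u tb xb : 0 < b -> 0 < c -> 0 < tb -> smooth_BS u ->
  Defs.d2 (Defs.d2 (ubarc a b c u)) tb xb =
  / exp (xb + tb) * u (tb / c) (b / c * exp (xb + tb))
  - b / c * Defs.d2 u (tb / c) (b / c * exp (xb + tb))
  + b / c * (b / c * exp (xb + tb)) * Defs.d2 (Defs.d2 u) (tb / c) (b / c * exp (xb + tb)).
Proof.
intros Hb Hc Ht Hs. unfold Defs.d2 at 1.
rewrite (Derive_ext _ (fun y => - / exp (y + tb) * u (tb / c) (b / c * exp (y + tb))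
  + b / c * Defs.d2 u (tb / c) (b / c * exp (y + tb)) + a / (2 * c)))
  by (intros; apply d2_ubarc; assumption).
assert (HX : 0 < b / c * exp (xb + tb)) by (apply Rmult_lt_0_compat; [apply Rdiv_lt_0_compat|apply exp_pos]; lra).
assert (Htc : 0 < tb / c) by (apply Rdiv_lt_0_compat; lra).
apply is_derive_unique. auto_derive.
- repeat split. apply Rgt_not_eq, exp_pos. apply (Hs _ _ Htc HX). apply (Hs _ _ Htc HX).
- unfold Defs.d2. assert (exp (xb + tb) > 0) by apply exp_pos. field. repeat split; lra.
Qed.

Lemma d1_ubarc a b c u tb xb : 0 < b -> 0 < c -> 0 < tb -> smooth_BS u ->
  Defs.d1 (ubarc a b c u) tb xb =
  - / exp (xb + tb) * u (tb / c) (b / c * exp (xb + tb))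
  + / exp (xb + tb) * (Defs.d1 u (tb / c) (b / c * exp (xb + tb)) * / c
      + Defs.d2 u (tb / c) (b / c * exp (xb + tb)) * (b / c * exp (xb + tb)))
  + a / (2 * c) - a / 2 * (1 + a / (2 * c)) / c.
Proof.
intros Hb Hc Ht Hs. unfold Defs.d1 at 1.
set (F := fun s => u (s / c) (b / c * exp (xb + s))).
rewrite (Derive_ext _ (fun s => / exp (xb + s) * F s
    + a / (2 * c) * (xb + s) - a / 2 * (1 + a / (2 * c)) * (s / c)))
  by (intros; unfold F; apply ubarc_eq; lra).
assert (HX : 0 < b / c * exp (xb + tb)) by (apply Rmult_lt_0_compat; [apply Rdiv_lt_0_compat|apply exp_pos]; lra).
assert (Htc : 0 < tb / c) by (apply Rdiv_lt_0_compat; lra).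
assert (HF : is_derive F tb (Defs.d1 u (tb / c) (b / c * exp (xb + tb)) * / c
      + Defs.d2 u (tb / c) (b / c * exp (xb + tb)) * (b / c * exp (xb + tb)))).
{ apply is_derive_Reals. unfold F.
  apply (derivable_pt_lim_comp_2d u (fun s => s / c) (fun s => b / c * exp (xb + s))).
  - apply smooth_diff; auto.
  - apply is_derive_Reals. auto_derive; [auto|ring].
  - apply is_derive_Reals. auto_derive; [auto|ring]. }
apply is_derive_unique. auto_derive.
- repeat split. apply Rgt_not_eq, exp_pos. eexists; exact HF.
- replace (Derive (fun x : R => F x) tb) with (Derive F tb) by reflexivity. rewrite (is_derive_unique _ _ _ HF). unfold F. assert (exp (xb + tb) > 0) by apply exp_pos. field. repeat split; lra.
Qed.

Lemma key_c a b c u tb xb t X : 0 < b -> 0 < c -> 0 < tb -> smooth_BS u ->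
  t = tb / c -> X = b / c * exp (xb + tb) ->
  Defs.d1 (ubarc a b c u) tb xb + (Defs.d2 (ubarc a b c u) tb xb + Defs.d2 (Defs.d2 (ubarc a b c u)) tb xb) ^ 2
  = / (c * exp (xb + tb)) *
    (Defs.d1 u t X + a * X ^ 2 * Defs.d2 (Defs.d2 u) t X + b * X ^ 3 * (Defs.d2 (Defs.d2 u) t X) ^ 2
      + c * X * Defs.d2 u t X - c * u t X).
Proof.
intros Hb Hc Ht Hs -> ->.
rewrite d1_ubarc, d2_ubarc, d22_ubarc; auto.
assert (exp (xb + tb) > 0) by apply exp_pos.
field. lra.
Qed.

Lemma ubar0_eq a b u s y : 0 < b ->
  ubar0 a b u s y = / exp y * u s (b * exp y) + a / 2 * y - a ^ 2 / 4 * s.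
Proof.
intros Hb. unfold ubar0.
replace (b * exp y / b) with (exp y) by (field; lra).
rewrite ln_exp. assert (exp y > 0) by apply exp_pos.
field. repeat split; lra.
Qed.

Lemma d2_ubar0 a b u tb y : 0 < b -> 0 < tb -> smooth_BS u ->
  Defs.d2 (ubar0 a b u) tb y =
  - / exp y * u tb (b * exp y) + b * Defs.d2 u tb (b * exp y) + a / 2.
Proof.
intros Hb Ht Hs. unfold Defs.d2 at 1.
rewrite (Derive_ext _ (fun y => / exp y * u tb (b * exp y) + a / 2 * y - a ^ 2 / 4 * tb))
  by (intros; apply ubar0_eq; lra).
assert (HX : 0 < b * exp y) by (apply Rmult_lt_0_compat; [|apply exp_pos]; lra).
apply is_derive_unique. auto_derive.
- repeat split. apply Rgt_not_eq, exp_pos. apply (Hs _ _ Ht HX).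
- unfold Defs.d2. assert (exp y > 0) by apply exp_pos. field. lra.
Qed.

Lemma d22_ubar0 a b u tb xb : 0 < b -> 0 < tb -> smooth_BS u ->
  Defs.d2 (Defs.d2 (ubar0 a b u)) tb xb =
  / exp xb * u tb (b * exp xb) - b * Defs.d2 u tb (b * exp xb)
  + b * (b * exp xb) * Defs.d2 (Defs.d2 u) tb (b * exp xb).
Proof.
intros Hb Ht Hs. unfold Defs.d2 at 1.
rewrite (Derive_ext _ (fun y => - / exp y * u tb (b * exp y) + b * Defs.d2 u tb (b * exp y) + a / 2))
  by (intros; apply d2_ubar0; assumption).
assert (HX : 0 < b * exp xb) by (apply Rmult_lt_0_compat; [|apply exp_pos]; lra).
apply is_derive_unique. auto_derive.
- repeat split. apply Rgt_not_eq, exp_pos. apply (Hs _ _ Ht HX). apply (Hs _ _ Ht HX).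
- unfold Defs.d2. assert (exp xb > 0) by apply exp_pos. field. lra.
Qed.

Lemma d1_ubar0 a b u tb xb : 0 < b -> 0 < tb -> smooth_BS u ->
  Defs.d1 (ubar0 a b u) tb xb =
  / exp xb * Defs.d1 u tb (b * exp xb) - a ^ 2 / 4.
Proof.
intros Hb Ht Hs. unfold Defs.d1 at 1.
rewrite (Derive_ext _ (fun s => / exp xb * u s (b * exp xb) + a / 2 * xb - a ^ 2 / 4 * s))
  by (intros; apply ubar0_eq; lra).
assert (HX : 0 < b * exp xb) by (apply Rmult_lt_0_compat; [|apply exp_pos]; lra).
apply is_derive_unique. auto_derive.
- repeat split. apply (Hs _ _ Ht HX).
- unfold Defs.d1. set (D := Derive (fun s => u s (b * exp xb)) tb). field. apply Rgt_not_eq, exp_pos.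
Qed.

Lemma key_0 a b u tb xb X : 0 < b -> 0 < tb -> smooth_BS u ->
  X = b * exp xb ->
  Defs.d1 (ubar0 a b u) tb xb + (Defs.d2 (ubar0 a b u) tb xb + Defs.d2 (Defs.d2 (ubar0 a b u)) tb xb) ^ 2
  = / exp xb *
    (Defs.d1 u tb X + a * X ^ 2 * Defs.d2 (Defs.d2 u) tb X + b * X ^ 3 * (Defs.d2 (Defs.d2 u) tb X) ^ 2
      + 0 * X * Defs.d2 u tb X - 0 * u tb X).
Proof.
intros Hb Ht Hs ->.
rewrite d1_ubar0, d2_ubar0, d22_ubar0; auto.
assert (exp xb > 0) by apply exp_pos.
field. lra.
Qed.

Theorem mainTheorem1 (a b c : R) (u : R -> R -> R) :
  0 < a -> 0 < b -> 0 <= c -> smooth_BS u ->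
  (c = 0 -> (solves_BS a b c u <-> solves_target (ubar0 a b u))) /\
  (0 < c -> (solves_BS a b c u <-> solves_target (ubarc a b c u))).
Proof.
intros Ha Hb Hc Hs. split.
- intros ->. split.
  + intros H tb xb Ht. rewrite (key_0 a b u tb xb (b * exp xb)); auto.
    rewrite (H tb (b * exp xb) Ht). ring.
    apply Rmult_lt_0_compat; [|apply exp_pos]; lra.
  + intros H t x Ht Hx.
    assert (E : x = b * exp (ln (x / b))) by (rewrite exp_ln; [field|apply Rdiv_lt_0_compat]; lra).
    assert (K := key_0 a b u t (ln (x / b)) x Hb Ht Hs E).
    rewrite (H t _ Ht) in K.
    assert (exp (ln (x / b)) > 0) by apply exp_pos.
    assert (Hi : / exp (ln (x / b)) <> 0) by (apply Rinv_neq_0_compat; lra).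
    symmetry in K. apply Rmult_integral in K. destruct K as [K|K]; [contradiction|exact K].
- intros Hc0. split.
  + intros H tb xb Ht.
    assert (Htc : 0 < tb / c) by (apply Rdiv_lt_0_compat; lra).
    assert (HX : 0 < b / c * exp (xb + tb)) by (apply Rmult_lt_0_compat; [apply Rdiv_lt_0_compat|apply exp_pos]; lra).
    rewrite (key_c a b c u tb xb (tb / c) (b / c * exp (xb + tb))); auto.
    rewrite (H _ _ Htc HX). ring.
  + intros H t x Ht Hx.
    assert (Htb : 0 < c * t) by (apply Rmult_lt_0_compat; lra).
    assert (E1 : t = c * t / c) by (field; lra).
    assert (E2 : x = b / c * exp ((ln (c * x / b) - c * t) + c * t)).
    { replace (ln (c * x / b) - c * t + c * t) with (ln (c * x / b)) by ring.
      rewrite exp_ln. field; lra. apply Rdiv_lt_0_compat; [apply Rmult_lt_0_compat|]; lra. }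
    assert (K := key_c a b c u (c * t) (ln (c * x / b) - c * t) t x Hb Hc0 Htb Hs E1 E2).
    rewrite (H _ _ Htb) in K.
    assert (exp (ln (c * x / b) - c * t + c * t) > 0) by apply exp_pos.
    assert (Hi : / (c * exp (ln (c * x / b) - c * t + c * t)) <> 0).
    { apply Rinv_neq_0_compat. apply Rgt_not_eq. apply Rmult_lt_0_compat; lra. }
    symmetry in K. apply Rmult_integral in K. destruct K as [K|K]; [contradiction|exact K].
Qed.
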